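(* Let $\kappa\in(0,1)$ and define, for $\varepsilon\in(0,1)$, $$f_\kappa(\varepsilon)=\bigl(1-\kappa\, Q^{-1}(\varepsilon)\bigr)(1-\varepsilon).$$ Then $f_\kappa$ has a unique maximizer $\varepsilon_g^{\star}=\varepsilon_g^\star(\kappa)\in(0,1)$, and $\varepsilon_g^{\star}$ is the unique solution in $(0,1)$ of the fixed point equation $$\Bigl(Q^{-1}(\varepsilon)-(1-\varepsilon)\,\bigl(Q^{-1}\bigr)'(\varepsilon)\Bigr)^{-1}=\kappa,\qquad\text{i.e.}\qquad \Bigl(Q^{-1}(\varepsilon)+(1-\varepsilon)\sqrt{2\pi}\,e^{(Q^{-1}(\varepsilon))^2/2}\Bigr)^{-1}=\kappa .$$ Furthermore, $\varepsilon_g^{\star}(\kappa)$ is increasing in $\kappa$.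
   Context: $Q(x)=\int_x^\infty \frac{1}{\sqrt{2\pi}}e^{-t^2/2}\,dt$ is the tail probability of a standard normal random variable, and $Q^{-1}:(0,1)\to\mathbb{R}$ is its inverse function. In the paper's setting, $f_\kappa$ is (up to the positive factor $\mu$) a Gaussian approximation of the goodput $R_\varepsilon(1-\varepsilon)$ as a function of the packet error probability $\varepsilon$, where $\kappa=\sigma(\mathsf{SNR})/(\mu(\mathsf{SNR})\sqrt{L})$ with $\mu,\sigma^2$ the mean and variance of $\log_2(1+\mathsf{SNR}|h|^2)$, $h\sim\mathcal{CN}(0,1)$, and $L$ the number of independent fading blocks per codeword. *)

(* Defs.v *)
From Stdlib Require Import Reals Lra ClassicalEpsilon.
Open Scope R_scope.

Definition gauss (t : R) : R := / sqrt (2 * PI) * exp (- t ^ 2 / 2).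

Definition is_Q (x l : R) : Prop :=
  forall eps, 0 < eps -> exists M, forall b, M <= b ->
    forall pr : Riemann_integrable gauss x b, Rabs (RiemannInt pr - l) < eps.

Definition Q (x : R) : R := epsilon (inhabits 0) (fun l => is_Q x l).

Definition Qinv (e : R) : R := epsilon (inhabits 0) (fun x => Q x = e).

Definition f (kappa e : R) : R := (1 - kappa * Qinv e) * (1 - e).

Definition is_maximizer (kappa e : R) : Prop :=
  0 < e < 1 /\ forall e', 0 < e' < 1 -> f kappa e' <= f kappa e.

Definition fixed_point (kappa e : R) : Prop :=
  / (Qinv e + (1 - e) * sqrt (2 * PI) * exp (Qinv e ^ 2 / 2)) = kappa.

(* Main.v *)
Require Import Defs.
From Stdlib Require Import Reals Lra ClassicalEpsilon.
Open Scope R_scope.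

Lemma D_eq f x l1 l2 : derivable_pt_lim f x l1 -> l1 = l2 -> derivable_pt_lim f x l2.
Proof. intros H ->; exact H. Qed.
Lemma D_const (c x : R) : derivable_pt_lim (fun _ => c) x 0.
Proof. exact (derivable_pt_lim_const c x). Qed.
Lemma D_id x : derivable_pt_lim (fun y => y) x 1.
Proof. exact (derivable_pt_lim_id x). Qed.
Lemma D_plus f g x a b : derivable_pt_lim f x a -> derivable_pt_lim g x b ->
  derivable_pt_lim (fun y => f y + g y) x (a + b).
Proof. intros; apply (derivable_pt_lim_plus f g); auto. Qed.
Lemma D_minus f g x a b : derivable_pt_lim f x a -> derivable_pt_lim g x b ->
  derivable_pt_lim (fun y => f y - g y) x (a - b).
Proof. intros; apply (derivable_pt_lim_minus f g); auto. Qed.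
Lemma D_mult f g x a b : derivable_pt_lim f x a -> derivable_pt_lim g x b ->
  derivable_pt_lim (fun y => f y * g y) x (a * g x + f x * b).
Proof. intros; apply (derivable_pt_lim_mult f g); auto. Qed.
Lemma D_opp f x a : derivable_pt_lim f x a -> derivable_pt_lim (fun y => - f y) x (- a).
Proof. intros; apply (derivable_pt_lim_opp f); auto. Qed.
Lemma D_comp f g x a b : derivable_pt_lim g x a -> derivable_pt_lim f (g x) b ->
  derivable_pt_lim (fun y => f (g y)) x (b * a).
Proof. intros; apply (derivable_pt_lim_comp g f); auto. Qed.
Lemma D_exp g x a : derivable_pt_lim g x a ->
  derivable_pt_lim (fun y => exp (g y)) x (exp (g x) * a).
Proof. intros; apply (D_comp exp g); auto. apply derivable_pt_lim_exp. Qed.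
Lemma D_pow g n x a : derivable_pt_lim g x a ->
  derivable_pt_lim (fun y => (g y) ^ n) x (INR n * (g x) ^ (pred n) * a).
Proof. intros; apply (D_comp (fun z => z ^ n) g); auto. apply derivable_pt_lim_pow. Qed.

Lemma D_inv g x a : derivable_pt_lim g x a -> g x <> 0 ->
  derivable_pt_lim (fun y => / g y) x (- a / (g x) ^ 2).
Proof.
  intros H Hn. apply D_eq with ((0 * g x - a * 1) / (g x)²).
  - eapply derivable_pt_lim_ext.
    2: apply (derivable_pt_lim_div (fun _ => 1) g x 0 a); [apply D_const|exact H|exact Hn].
    intro z. unfold div_fct. unfold Rdiv. ring.
  - unfold Rsqr. field. auto.
Qed.
Lemma D_div f g x a b : derivable_pt_lim f x a -> derivable_pt_lim g x b -> g x <> 0 ->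
  derivable_pt_lim (fun y => f y / g y) x ((a * g x - f x * b) / (g x) ^ 2).
Proof.
  intros Hf Hg Hn. apply D_eq with (a * / g x + f x * (- b / (g x)^2)).
  - apply (D_mult f (fun y => / g y)); auto. apply D_inv; auto.
  - field; auto.
Qed.

Lemma D_divc f c x a : derivable_pt_lim f x a ->
  derivable_pt_lim (fun y => f y / c) x (a / c).
Proof. intros H. unfold Rdiv. apply D_eq with (a * / c + f x * 0). apply (D_mult f (fun _ => / c)); auto. apply D_const. ring. Qed.

Ltac dhook := fail.
Ltac dtac :=
  first [ apply D_const | apply D_id |
  lazymatch goal with
  | |- derivable_pt_lim (Rmult ?a) ?x ?l => change (derivable_pt_lim (fun y => a * y) x l); dtac
  | |- derivable_pt_lim (Rplus ?a) ?x ?l => change (derivable_pt_lim (fun y => a + y) x l); dtac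
  | |- derivable_pt_lim (Rminus ?a) ?x ?l => change (derivable_pt_lim (fun y => a - y) x l); dtac
  | |- derivable_pt_lim Ropp _ _ => apply (D_opp (fun y => y)); apply D_id
  | |- derivable_pt_lim exp _ _ => apply derivable_pt_lim_exp
  | |- derivable_pt_lim Rinv _ _ => eapply (D_inv (fun y => y)); [apply D_id|idtac]
  | |- derivable_pt_lim (fun y => _ + _) _ _ => eapply D_plus; [dtac|dtac]
  | |- derivable_pt_lim (fun y => _ - _) _ _ => eapply D_minus; [dtac|dtac]
  | |- derivable_pt_lim (fun y => _ * _) _ _ => eapply D_mult; [dtac|dtac]
  | |- derivable_pt_lim (fun y => _ / _) _ _ => first [eapply D_divc; dtac | eapply D_div; [dtac|dtac|idtac]]
  | |- derivable_pt_lim (fun y => - _) _ _ => eapply D_opp; dtac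
  | |- derivable_pt_lim (fun y => / _) _ _ => eapply D_inv; [dtac|idtac]
  | |- derivable_pt_lim (fun y => exp _) _ _ => eapply D_exp; dtac
  | |- derivable_pt_lim (fun y => _ ^ _) _ _ => eapply D_pow; dtac
  | |- derivable_pt_lim (fun y => ?F _) _ _ => eapply (D_comp F); [dtac|dhook]
  | _ => dhook
  end ].
Ltac dsolve := eapply D_eq; [dtac | ..]; cbv beta; simpl; try lra.

Lemma D_cont f x l : derivable_pt_lim f x l -> continuity_pt f x.
Proof. intro H. apply derivable_continuous_pt. exists l. exact H. Qed.

Goal forall t, derivable_pt_lim (fun u => -u * exp (-(u^2*(1+t^2))/2)) 3 0.
intros. dsolve. simpl. Abort.

Lemma mvt_any g g1 a b : (forall u, derivable_pt_lim g u (g1 u)) -> a <> b ->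
  exists c, g b - g a = g1 c * (b - a) /\ Rabs (c - a) < Rabs (b - a).
Proof.
  intros Hd Hab. destruct (Rlt_or_le a b) as [Hl|Hl].
  - destruct (MVT_cor2 g g1 a b Hl (fun c _ => Hd c)) as [c [Hc1 Hc2]].
    exists c; split; auto. rewrite !Rabs_right by lra. lra.
  - assert (b < a) by lra.
    destruct (MVT_cor2 g g1 b a H (fun c _ => Hd c)) as [c [Hc1 Hc2]].
    exists c; split. lra. rewrite !Rabs_left1 by lra. lra.
Qed.

Lemma mvt_int g g1 a b : a < b -> (forall u, a <= u <= b -> derivable_pt_lim g u (g1 u)) ->
  exists c, g b - g a = g1 c * (b - a) /\ a < c < b.
Proof. intros; apply MVT_cor2; auto. Qed.

Lemma const_on g a b : a <= b -> (forall u, a <= u <= b -> derivable_pt_lim g u 0) -> g b = g a.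
Proof.
  intros Hab Hd. destruct (Req_dec a b) as [->|Hn]; auto.
  destruct (MVT_cor2 g (fun _ => 0) a b) as [c [Hc _]]; auto. lra. lra.
Qed.

Lemma incr_strict g g1 a b : a < b -> (forall u, a <= u <= b -> derivable_pt_lim g u (g1 u)) ->
  (forall u, a <= u <= b -> 0 < g1 u) -> g a < g b.
Proof.
  intros Hab Hd Hp. destruct (MVT_cor2 g g1 a b Hab Hd) as [c [Hc Hc2]].
  assert (0 < g1 c) by (apply Hp; lra). assert (0 < g1 c * (b - a)) by (apply Rmult_lt_0_compat; lra). lra.
Qed.

Lemma FTC_gen (f G : R -> R) a b (pr : Riemann_integrable f a b) : a <= b ->
  (forall x, a <= x <= b -> derivable_pt_lim G x (f x)) ->
  (forall x, a <= x <= b -> continuity_pt f x) ->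
  RiemannInt pr = G b - G a.
Proof.
  intros h HG C0.
  set (P := primitive h (FTC_P1 h C0)).
  assert (HP : forall x, a <= x <= b -> derivable_pt_lim P x (f x)).
  { intros; apply RiemannInt_P28; auto. }
  rewrite (RiemannInt_P20 h (FTC_P1 h C0) pr). fold P.
  assert ((fun y => P y - G y) b = (fun y => P y - G y) a).
  { apply (const_on (fun y => P y - G y)); auto. intros u Hu. apply D_eq with (f u - f u). apply D_minus; auto. ring. }
  simpl in H. lra.
Qed.

Lemma cont_int f : (forall x, continuity_pt f x) -> forall a b, Riemann_integrable f a b.
Proof.
  intros Hc a b. destruct (Rle_dec a b).
  - apply continuity_implies_RiemannInt; auto.
  - apply RiemannInt_P1. apply continuity_implies_RiemannInt; auto. lra.
Qed.

Lemma prim_val f a b (h : a <= b) (C0 : forall x, a <= x <= b -> continuity_pt f x) (pr : forall a b, Riemann_integrable f a b) z :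
  a <= z <= b -> primitive h (FTC_P1 h C0) z = RiemannInt (pr a z).
Proof.
  intros [H1 H2]. unfold primitive. destruct (Rle_dec a z); [|lra].
  destruct (Rle_dec z b); [|lra]. apply RiemannInt_P5.
Qed.

Lemma integral_deriv f (Hc : forall x, continuity_pt f x)
  (pr : forall a b, Riemann_integrable f a b) c t :
  derivable_pt_lim (fun x => RiemannInt (pr c x)) t (f t).
Proof.
  set (a := Rmin c t - 1). set (b := Rmax c t + 1).
  assert (h : a <= b) by (unfold a, b; generalize (Rmin_l c t) (Rmax_l c t); lra).
  assert (C0 : forall x, a <= x <= b -> continuity_pt f x) by auto.
  set (P := primitive h (FTC_P1 h C0)).
  assert (Hac : a <= c <= b) by (unfold a, b; generalize (Rmin_l c t) (Rmax_l c t); lra).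
  assert (Hat : a < t < b) by (unfold a, b; generalize (Rmin_r c t) (Rmax_r c t); lra).
  apply (derivable_pt_lim_locally_ext (fun z => P z - P c) _ t a b); auto.
  - intros z Hz. unfold P. rewrite (prim_val f a b h C0 pr z) by lra.
    rewrite (prim_val f a b h C0 pr c) by lra.
    rewrite <- (RiemannInt_P26 (pr a c) (pr c z) (pr a z)). ring.
  - apply D_eq with (f t - 0). apply D_minus. unfold P. apply RiemannInt_P28. lra.
    apply D_const. ring.
Qed.

Definition phi0 (x : R) : R := exp (- x ^ 2 / 2).

Lemma phi0_der x : derivable_pt_lim phi0 x (- x * phi0 x).
Proof. unfold phi0. dsolve. Qed.
Lemma phi0_cont x : continuity_pt phi0 x.
Proof. eapply D_cont; apply phi0_der. Qed.
Lemma phi0_pos x : 0 < phi0 x.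
Proof. apply exp_pos. Qed.
Lemma exp_le_1 y : y <= 0 -> exp y <= 1.
Proof. intros [H|H]. left. rewrite <- exp_0. apply exp_increasing; auto. subst; rewrite exp_0; lra. Qed.
Lemma phi0_le1 x : phi0 x <= 1.
Proof. unfold phi0. apply exp_le_1. assert (0 <= x^2) by apply pow2_ge_0. lra. Qed.

Definition phi0_int : forall a b, Riemann_integrable phi0 a b := cont_int phi0 phi0_cont.
Definition E (t : R) : R := RiemannInt (phi0_int 0 t).

Lemma E_der t : derivable_pt_lim E t (phi0 t).
Proof. apply integral_deriv. apply phi0_cont. Qed.
Lemma E_0 : E 0 = 0.
Proof. unfold E. assert (H := RiemannInt_P26 (phi0_int 0 0) (phi0_int 0 0) (phi0_int 0 0)). lra. Qed.

Lemma rabs_le x b : Rabs x <= b -> - b <= x <= b.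
Proof. unfold Rabs; destruct (Rcase_abs x); lra. Qed.
Lemma rabs_lt x b : Rabs x < b -> - b < x < b.
Proof. unfold Rabs; destruct (Rcase_abs x); lra. Qed.

Lemma taylor g g1 g2 t C h : (forall u, derivable_pt_lim g u (g1 u)) ->
  (forall u, derivable_pt_lim g1 u (g2 u)) ->
  (forall u, t - 1 <= u <= t + 1 -> Rabs (g2 u) <= C) -> Rabs h <= 1 ->
  Rabs (g (t + h) - g t - h * g1 t) <= C * h ^ 2.
Proof.
  intros H1 H2 HC Hh.
  assert (C0 : 0 <= C) by (apply Rle_trans with (Rabs (g2 t)); [apply Rabs_pos| apply HC; lra]).
  assert (Hh2 : 0 <= h^2) by apply pow2_ge_0.
  destruct (Req_dec h 0) as [->|hn].
  { replace (g (t+0) - g t - 0 * g1 t) with 0 by (rewrite Rplus_0_r; ring). rewrite Rabs_R0. simpl; nra. }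
  destruct (mvt_any g g1 t (t + h) H1) as [c [Hc1 Hc2]]. lra.
  replace (t + h - t) with h in * by ring.
  destruct (Req_dec c t) as [->|cn].
  { replace (g (t+h) - g t - h * g1 t) with 0 by lra. rewrite Rabs_R0. nra. }
  destruct (mvt_any g1 g2 t c H2) as [c' [Hc'1 Hc'2]]. auto.
  replace (g (t+h) - g t - h * g1 t) with (h * (c - t) * g2 c') by (rewrite Hc1; nra).
  rewrite !Rabs_mult.
  assert (Rabs (g2 c') <= C) by (apply HC; assert (Rabs (c' - t) < 1) by lra; apply rabs_lt in H; lra).
  assert (Rabs (c - t) <= Rabs h) by lra.
  replace (h^2) with (Rabs h * Rabs h) by (rewrite <- Rabs_mult; simpl; rewrite Rmult_1_r; apply Rabs_right; nra).
  generalize (Rabs_pos h) (Rabs_pos (c-t)) (Rabs_pos (g2 c')); intros.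
  rewrite Rmult_comm. apply Rmult_le_compat; auto. apply Rmult_le_pos; auto.
  apply Rmult_le_compat_l; auto.
Qed.

Lemma param_deriv (k k1 k2 : R -> R -> R) t C
  (pk : forall u, Riemann_integrable (fun s => k u s) 0 1)
  (pk1 : forall u, Riemann_integrable (fun s => k1 u s) 0 1) :
  (forall u s, derivable_pt_lim (fun v => k v s) u (k1 u s)) ->
  (forall u s, derivable_pt_lim (fun v => k1 v s) u (k2 u s)) ->
  (forall u s, t - 1 <= u <= t + 1 -> 0 <= s <= 1 -> Rabs (k2 u s) <= C) ->
  derivable_pt_lim (fun u => RiemannInt (pk u)) t (RiemannInt (pk1 t)).
Proof.
  intros D1 D2 HC eps Heps.
  assert (C0 : 0 <= C) by (apply Rle_trans with (Rabs (k2 t 0)); [apply Rabs_pos| apply HC; lra]).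
  assert (Hd : 0 < Rmin 1 (eps / (C + 1))).
  { apply Rmin_glb_lt. lra. apply Rdiv_lt_0_compat; lra. }
  exists (mkposreal _ Hd). simpl. intros h hn hl.
  assert (hl1 : Rabs h <= 1) by (generalize (Rmin_l 1 (eps/(C+1))); lra).
  assert (hl2 : Rabs h < eps / (C+1)) by (generalize (Rmin_r 1 (eps/(C+1))); lra).
  assert (pa := RiemannInt_P10 (-1) (pk (t+h)) (pk t)).
  assert (pb := RiemannInt_P10 (-h) pa (pk1 t)).
  assert (Ea := RiemannInt_P13 (pk (t+h)) (pk t) pa).
  assert (Eb := RiemannInt_P13 pa (pk1 t) pb).
  assert (Bd := @RiemannInt_const_bound _ 0 1 (- (C * h^2)) (C * h^2) pb).
  destruct Bd as [Bd1 Bd2]. lra.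
  { intros s Hs. assert (T := taylor (fun v => k v s) (fun v => k1 v s) (fun v => k2 v s) t C h
       (fun u => D1 u s) (fun u => D2 u s) (fun u Hu => HC u s Hu ltac:(lra)) hl1).
    simpl in T. apply rabs_le in T. lra. }
  set (I := RiemannInt pb) in *.
  replace ((RiemannInt (pk (t + h)) - RiemannInt (pk t)) / h - RiemannInt (pk1 t)) with (I / h)
    by (rewrite Eb, Ea; field; auto).
  unfold Rdiv. rewrite Rabs_mult, Rabs_inv.
  assert (HI : Rabs I <= C * h^2) by (apply Rabs_le; lra).
  assert (Hh : 0 < Rabs h) by (apply Rabs_pos_lt; auto).
  replace (h^2) with (Rabs h * Rabs h) in HI by (rewrite <- Rabs_mult; simpl; rewrite Rmult_1_r; apply Rabs_right; nra).
  apply Rle_lt_trans with (C * Rabs h).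
  { apply Rmult_le_reg_r with (Rabs h); auto. rewrite Rmult_assoc, Rinv_l by lra. lra. }
  assert (C * Rabs h <= C * (eps / (C+1))) by (apply Rmult_le_compat_l; lra).
  assert (C * (eps / (C+1)) < eps). { apply Rmult_lt_reg_r with (C+1). lra. field_simplify; nra. }
  lra.
Qed.

Definition kk (u s : R) := exp (- (u ^ 2 * (1 + s ^ 2)) / 2) / (1 + s ^ 2).
Definition k1 (u s : R) := - u * exp (- (u ^ 2 * (1 + s ^ 2)) / 2).
Definition k2 (u s : R) := (u ^ 2 * (1 + s ^ 2) - 1) * exp (- (u ^ 2 * (1 + s ^ 2)) / 2).

Lemma one_s2 s : 1 + s ^ 2 <> 0.
Proof. generalize (pow2_ge_0 s); lra. Qed.

Lemma kk_d1 u s : derivable_pt_lim (fun v => kk v s) u (k1 u s).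
Proof. unfold kk, k1. dsolve. all: try (field; generalize (pow2_ge_0 s); simpl; nra). all: generalize (pow2_ge_0 s); simpl; nra. Qed.
Lemma k1_d2 u s : derivable_pt_lim (fun v => k1 v s) u (k2 u s).
Proof. unfold k1, k2. dsolve. all: try field. Qed.
Lemma kk_cont u s : continuity_pt (fun s => kk u s) s.
Proof. unfold kk. eapply D_cont. dtac. simpl. generalize (pow2_ge_0 s); simpl; lra. Qed.
Lemma k1_cont u s : continuity_pt (fun s => k1 u s) s.
Proof. unfold k1. eapply D_cont. dtac. Qed.

Definition pkk u : Riemann_integrable (fun s => kk u s) 0 1 := cont_int _ (kk_cont u) 0 1.
Definition pk1 u : Riemann_integrable (fun s => k1 u s) 0 1 := cont_int _ (k1_cont u) 0 1.
Definition F (u : R) := RiemannInt (pkk u).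

Lemma exp_le_mono a b : a <= b -> exp a <= exp b.
Proof. intros [H|H]. left; apply exp_increasing; auto. subst; lra. Qed.

Lemma k2_bound t u s : t - 1 <= u <= t + 1 -> 0 <= s <= 1 ->
  Rabs (k2 u s) <= 2 * (Rabs t + 1) ^ 2 + 1.
Proof.
  intros Hu Hs. unfold k2. rewrite Rabs_mult.
  rewrite (Rabs_right (exp _)) by (left; apply exp_pos).
  assert (He : exp (- (u ^ 2 * (1 + s ^ 2)) / 2) <= 1).
  { apply exp_le_1. assert (0 <= u^2 * (1 + s^2)) by (apply Rmult_le_pos; [apply pow2_ge_0| generalize (pow2_ge_0 s); lra]). lra. }
  assert (Hu2 : u ^ 2 <= (Rabs t + 1) ^ 2).
  { assert (Rabs u <= Rabs t + 1).
    { unfold Rabs; destruct (Rcase_abs u), (Rcase_abs t); lra. }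
    rewrite <- (pow2_abs u). apply pow_incr. split; auto. apply Rabs_pos. }
  assert (Hs2 : s ^ 2 <= 1) by (simpl; nra).
  assert (Ha : Rabs (u ^ 2 * (1 + s ^ 2) - 1) <= 2 * (Rabs t + 1) ^ 2 + 1).
  { assert (0 <= u ^ 2) by apply pow2_ge_0. assert (0 <= s^2) by apply pow2_ge_0.
    apply Rabs_le. split; nra. }
  assert (0 <= Rabs (u ^ 2 * (1 + s ^ 2) - 1)) by apply Rabs_pos.
  assert (0 < exp (- (u ^ 2 * (1 + s ^ 2)) / 2)) by apply exp_pos.
  nra.
Qed.

Lemma F_der t : derivable_pt_lim F t (RiemannInt (pk1 t)).
Proof.
  apply (param_deriv kk k1 k2 t (2 * (Rabs t + 1) ^ 2 + 1) pkk pk1).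
  - apply kk_d1.
  - apply k1_d2.
  - intros; apply k2_bound; auto.
Qed.

Ltac dhook ::= first [apply E_der | apply phi0_der].

Lemma int_k1 t : RiemannInt (pk1 t) = - phi0 t * E t.
Proof.
  rewrite (FTC_gen (fun s => k1 t s) (fun s => - phi0 t * E (t * s)) 0 1 (pk1 t)).
  - rewrite Rmult_0_r, Rmult_1_r, E_0. ring.
  - lra.
  - intros x _. dsolve. unfold k1, phi0.
    replace (- (t ^ 2 * (1 + x ^ 2)) / 2) with (- t ^ 2 / 2 + - (t * x) ^ 2 / 2) by (simpl; field).
    rewrite exp_plus. ring.
  - intros; apply k1_cont.
Qed.

Lemma F_0 : F 0 = PI / 4.
Proof.
  unfold F. rewrite (FTC_gen (fun s => kk 0 s) atan 0 1 (pkk 0)).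
  - rewrite atan_1, atan_0. ring.
  - lra.
  - intros x _. eapply D_eq. apply derivable_pt_lim_atan. unfold kk.
    replace (- (0 ^ 2 * (1 + x ^ 2)) / 2) with 0 by (simpl; field). rewrite exp_0. field. apply one_s2.
  - intros; apply kk_cont.
Qed.

Lemma H_const t : E t ^ 2 + 2 * F t = PI / 2.
Proof.
  assert (Hd : forall u, derivable_pt_lim (fun v => E v ^ 2 + 2 * F v) u 0).
  { intro u. apply D_eq with (INR 2 * E u ^ 1 * phi0 u + (0 * F u + 2 * RiemannInt (pk1 u))).
    apply D_plus. apply D_pow. apply E_der. apply D_mult. apply D_const. apply F_der.
    rewrite int_k1. simpl. ring. }
  assert (H0 : E 0 ^ 2 + 2 * F 0 = PI / 2) by (rewrite E_0, F_0; simpl; field).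
  destruct (Rle_dec 0 t).
  - rewrite <- H0. apply (const_on (fun v => E v ^ 2 + 2 * F v)); auto.
  - rewrite <- H0. symmetry. apply (const_on (fun v => E v ^ 2 + 2 * F v)); auto. lra.
Qed.

Lemma F_bounds t : 0 < F t <= phi0 t.
Proof.
  assert (B := @RiemannInt_const_bound _ 0 1 (exp (- t ^ 2) / 2) (phi0 t) (pkk t)).
  destruct B as [B1 B2]. lra.
  { intros s Hs. unfold kk, phi0. assert (0 <= s^2) by apply pow2_ge_0.
    assert (s ^ 2 <= 1) by (simpl; nra). assert (0 <= t^2) by apply pow2_ge_0.
    split.
    - apply Rle_trans with (exp (- (t ^ 2 * (1 + s ^ 2)) / 2) / 2).
      + unfold Rdiv. apply Rmult_le_compat_r. lra. apply exp_le_mono. nra.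
      + unfold Rdiv. apply Rmult_le_compat_l. left; apply exp_pos.
        apply Rinv_le_contravar; lra.
    - apply Rle_trans with (exp (- (t ^ 2 * (1 + s ^ 2)) / 2)).
      + unfold Rdiv. rewrite <- (Rmult_1_r (exp _)) at 2. apply Rmult_le_compat_l. left; apply exp_pos.
        rewrite <- Rinv_1. apply Rinv_le_contravar; lra.
      + apply exp_le_mono. nra. }
  unfold F. split. assert (0 < exp (- t ^ 2)) by apply exp_pos. lra. lra.
Qed.

Lemma E_sign_pos t : 0 < t -> 0 < E t.
Proof. intro. rewrite <- E_0. apply (incr_strict E phi0); auto. intros; apply E_der. intros; apply phi0_pos. Qed.
Lemma E_sign_neg t : t < 0 -> E t < 0.
Proof. intro. rewrite <- E_0. apply (incr_strict E phi0); auto. intros; apply E_der. intros; apply phi0_pos. Qed.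

Definition SS := sqrt (2 * PI).
Lemma S_pos : 0 < SS.
Proof. unfold SS. apply sqrt_lt_R0. generalize PI_RGT_0; lra. Qed.
Lemma S_sq : SS * SS = 2 * PI.
Proof. unfold SS. apply sqrt_sqrt. generalize PI_RGT_0; lra. Qed.

Lemma E_sq t : E t * E t = SS * SS / 4 - 2 * F t.
Proof. rewrite S_sq. generalize (H_const t). simpl. lra. Qed.

Lemma E_bound t : - (SS / 2) < E t < SS / 2.
Proof.
  generalize (E_sq t) (F_bounds t) S_pos; intros H1 H2 H3.
  split; nra.
Qed.

Definition q (x : R) := 1 / 2 - E x / SS.
Definition Phi (x : R) := 1 / 2 + E x / SS.

Lemma q_range x : 0 < q x < 1.
Proof.
  generalize (E_bound x) S_pos; intros [H1 H2] H3. unfold q.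
  assert (E x / SS < 1/2). { apply Rmult_lt_reg_r with SS; auto. unfold Rdiv. rewrite Rmult_assoc, Rinv_l; lra. }
  assert (- (1/2) < E x / SS). { apply Rmult_lt_reg_r with SS; auto. unfold Rdiv. rewrite Rmult_assoc, Rinv_l; lra. }
  lra.
Qed.

Lemma Phi_q x : Phi x = 1 - q x.
Proof. unfold Phi, q. field. generalize S_pos; lra. Qed.

Lemma q_small x : 0 <= x -> q x <= 4 * phi0 x / (SS * SS).
Proof.
  intro Hx. generalize (E_sq x) (F_bounds x) S_pos (E_bound x); intros H1 [H2 H2'] H3 [H4 H5].
  assert (HE : 0 <= E x) by (destruct Hx as [Hx|Hx]; [left; apply E_sign_pos; auto| subst; rewrite E_0; lra]).
  assert (K : (SS / 2 - E x) * (SS / 2) <= 2 * phi0 x) by nra.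
  unfold q. replace (1/2 - E x / SS) with ((SS / 2 - E x) * (SS / 2) * (2 / (SS * SS))) by (field; lra).
  replace (4 * phi0 x / (SS * SS)) with (2 * phi0 x * (2 / (SS * SS))) by (field; lra).
  apply Rmult_le_compat_r; auto. left. apply Rdiv_lt_0_compat. lra. nra.
Qed.

Lemma Phi_small x : x <= 0 -> Phi x <= 4 * phi0 x / (SS * SS).
Proof.
  intro Hx. generalize (E_sq x) (F_bounds x) S_pos (E_bound x); intros H1 [H2 H2'] H3 [H4 H5].
  assert (HE : E x <= 0) by (destruct Hx as [Hx|Hx]; [left; apply E_sign_neg; auto| subst; rewrite E_0; lra]).
  assert (K : (SS / 2 + E x) * (SS / 2) <= 2 * phi0 x) by nra.
  unfold Phi. replace (1/2 + E x / SS) with ((SS / 2 + E x) * (SS / 2) * (2 / (SS * SS))) by (field; lra).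
  replace (4 * phi0 x / (SS * SS)) with (2 * phi0 x * (2 / (SS * SS))) by (field; lra).
  apply Rmult_le_compat_r; auto. left. apply Rdiv_lt_0_compat. lra. nra.
Qed.

Lemma phi0_t2 x : phi0 x * x ^ 2 <= 1.
Proof.
  unfold phi0. replace (- x ^ 2 / 2) with (- (x^2/4) + - (x^2/4)) by field.
  rewrite exp_plus, exp_Ropp.
  set (y := exp (x ^ 2 / 4)).
  assert (Hy : 1 + x ^ 2 / 4 <= y) by apply exp_ineq1_le.
  assert (Hx2 : 0 <= x ^ 2) by apply pow2_ge_0.
  assert (Hyp : 0 < y) by apply exp_pos.
  assert (x ^ 2 <= y * y).
  { assert (x ^ 2 <= (1 + x^2/4) * (1 + x^2/4)).
    { generalize (pow2_ge_0 (1 - x^2/4)). set (a := x^2). simpl. intros. nra. }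
    assert (0 <= 1 + x^2/4) by lra. nra. }
  replace (/ y * / y * x ^ 2) with (x ^ 2 / (y * y)) by (field; lra).
  apply Rmult_le_reg_r with (y * y). nra. unfold Rdiv. rewrite Rmult_assoc, Rinv_l by nra. lra.
Qed.

Lemma phi0_tail eps : 0 < eps -> exists T, 1 <= T /\ forall x, T <= Rabs x -> Rabs x * phi0 x < eps.
Proof.
  intro He. exists (1 + / eps). split.
  { assert (0 < / eps) by (apply Rinv_0_lt_compat; auto). lra. }
  intros x Hx. assert (Hie : 0 < / eps) by (apply Rinv_0_lt_compat; auto).
  assert (Ha : 0 < Rabs x) by lra.
  assert (K : phi0 x * (Rabs x * Rabs x) <= 1).
  { replace (Rabs x * Rabs x) with (x ^ 2). apply phi0_t2. rewrite <- pow2_abs. simpl; ring. }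
  assert (P := phi0_pos x).
  assert (Rabs x * phi0 x <= / Rabs x).
  { apply Rmult_le_reg_r with (Rabs x); auto. rewrite Rinv_l by lra. nra. }
  assert (/ Rabs x < eps).
  { rewrite <- (Rinv_inv eps). apply Rinv_lt_contravar. nra. lra. }
  lra.
Qed.

Lemma gauss_phi0 x : gauss x = / SS * phi0 x.
Proof. reflexivity. Qed.
Lemma gauss_pos x : 0 < gauss x.
Proof. rewrite gauss_phi0. apply Rmult_lt_0_compat. apply Rinv_0_lt_compat, S_pos. apply phi0_pos. Qed.
Lemma gauss_cont x : continuity_pt gauss x.
Proof. unfold gauss. eapply D_cont. dtac. Qed.

Lemma gauss_int x b (pr : Riemann_integrable gauss x b) : x <= b -> RiemannInt pr = (E b - E x) / SS.
Proof.
  intro Hxb. rewrite (FTC_gen gauss (fun y => E y / SS) x b pr Hxb).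
  - field. generalize S_pos; lra.
  - intros y _. eapply D_eq. apply D_divc. apply E_der. rewrite gauss_phi0. field. generalize S_pos; lra.
  - intros; apply gauss_cont.
Qed.

Lemma is_Q_q x : is_Q x (q x).
Proof.
  intros eps He. assert (HS := S_pos).
  destruct (phi0_tail (eps * (SS * SS) / 4)) as [T [HT1 HT]]. apply Rdiv_lt_0_compat; [apply Rmult_lt_0_compat; [lra|nra]|lra].
  exists (Rmax x T). intros b Hb pr.
  assert (Hxb : x <= b) by (generalize (Rmax_l x T); lra).
  assert (HTb : T <= b) by (generalize (Rmax_r x T); lra).
  rewrite (gauss_int x b pr Hxb).
  replace ((E b - E x) / SS - q x) with (- q b) by (unfold q; field; lra).
  rewrite Rabs_Ropp. rewrite Rabs_right by (generalize (q_range b); lra).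
  assert (Hb0 : 0 <= b) by lra.
  apply Rle_lt_trans with (4 * phi0 b / (SS * SS)). apply q_small; auto.
  assert (K := HT b ltac:(rewrite Rabs_right; lra)). rewrite Rabs_right in K by lra.
  assert (phi0 b <= b * phi0 b) by (generalize (phi0_pos b); nra).
  apply Rmult_lt_reg_r with (SS * SS / 4). nra.
  replace (4 * phi0 b / (SS * SS) * (SS * SS / 4)) with (phi0 b) by (field; lra).
  replace (eps * (SS * SS / 4)) with (eps * (SS * SS) / 4) by field. lra.
Qed.

Lemma is_Q_unique x l1 l2 : is_Q x l1 -> is_Q x l2 -> l1 = l2.
Proof.
  intros H1 H2. destruct (Req_dec l1 l2) as [|Hn]; auto. exfalso.
  set (eps := Rabs (l1 - l2) / 2).
  assert (He : 0 < eps) by (unfold eps; apply Rdiv_lt_0_compat; [apply Rabs_pos_lt; lra| lra]).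
  destruct (H1 eps He) as [M1 HM1]. destruct (H2 eps He) as [M2 HM2].
  set (b := Rmax x (Rmax M1 M2)).
  assert (pr : Riemann_integrable gauss x b) by (apply cont_int; apply gauss_cont).
  assert (A1 := HM1 b ltac:(unfold b; generalize (Rmax_l M1 M2) (Rmax_r x (Rmax M1 M2)); lra) pr).
  assert (A2 := HM2 b ltac:(unfold b; generalize (Rmax_r M1 M2) (Rmax_r x (Rmax M1 M2)); lra) pr).
  apply rabs_lt in A1. apply rabs_lt in A2. unfold eps in *.
  unfold Rabs in *. destruct (Rcase_abs (l1 - l2)); lra.
Qed.

Lemma Q_eq x : Q x = q x.
Proof.
  apply (is_Q_unique x). unfold Q. apply epsilon_spec. exists (q x). apply is_Q_q. apply is_Q_q.
Qed.

Ltac dhook ::= first [apply E_der | apply phi0_der].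

Lemma Phi_der x : derivable_pt_lim Phi x (gauss x).
Proof. unfold Phi. dsolve. rewrite gauss_phi0. field. generalize S_pos; lra. Qed.
Lemma q_der x : derivable_pt_lim q x (- gauss x).
Proof. unfold q. dsolve. rewrite gauss_phi0. field. generalize S_pos; lra. Qed.
Lemma q_cont x : continuity_pt q x.
Proof. eapply D_cont; apply q_der. Qed.

Lemma Phi_incr x y : x < y -> Phi x < Phi y.
Proof. intro. apply (incr_strict Phi gauss); auto. intros; apply Phi_der. intros; apply gauss_pos. Qed.
Lemma q_decr x y : x < y -> q y < q x.
Proof. intro H. generalize (Phi_incr x y H). rewrite !Phi_q. lra. Qed.
Lemma q_inj x y : q x = q y -> x = y.
Proof. intro H. destruct (Rtotal_order x y) as [H1|[H1|H1]]; auto.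
  generalize (q_decr _ _ H1); lra. generalize (q_decr _ _ H1); lra. Qed.

Lemma q_surj e : 0 < e < 1 -> exists x, q x = e.
Proof.
  intros He. assert (HS := S_pos).
  destruct (phi0_tail (Rmin e (1 - e) * (SS * SS) / 4)) as [T [HT1 HT]].
  { apply Rdiv_lt_0_compat; [|lra]. apply Rmult_lt_0_compat. apply Rmin_glb_lt; lra. nra. }
  assert (Hm1 := Rmin_l e (1 - e)). assert (Hm2 := Rmin_r e (1 - e)).
  assert (Hb : q T < e).
  { apply Rle_lt_trans with (4 * phi0 T / (SS * SS)). apply q_small; lra.
    assert (K := HT T ltac:(rewrite Rabs_right; lra)). rewrite Rabs_right in K by lra.
    assert (phi0 T <= T * phi0 T) by (generalize (phi0_pos T); nra).
    apply Rmult_lt_reg_r with (SS * SS / 4). nra.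
    replace (4 * phi0 T / (SS * SS) * (SS * SS / 4)) with (phi0 T) by (field; lra).
    assert (Rmin e (1 - e) * (SS * SS) / 4 <= e * (SS * SS / 4)).
    { unfold Rdiv. rewrite Rmult_assoc. apply Rmult_le_compat_r; nra. }
    lra. }
  assert (Ha : e < q (- T)).
  { assert (Phi (-T) < 1 - e).
    { apply Rle_lt_trans with (4 * phi0 (-T) / (SS * SS)). apply Phi_small; lra.
      assert (K := HT (-T) ltac:(rewrite Rabs_left; lra)). rewrite Rabs_left in K by lra.
      assert (phi0 (-T) <= - - T * phi0 (-T)) by (generalize (phi0_pos (-T)); nra).
      apply Rmult_lt_reg_r with (SS * SS / 4). nra.
      replace (4 * phi0 (-T) / (SS * SS) * (SS * SS / 4)) with (phi0 (-T)) by (field; lra).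
      assert (Rmin e (1 - e) * (SS * SS) / 4 <= (1 - e) * (SS * SS / 4)).
      { unfold Rdiv. rewrite Rmult_assoc. apply Rmult_le_compat_r; nra. }
      lra. }
    rewrite Phi_q in H. lra. }
  destruct (IVT (fun y => e - q y) (-T) T) as [z [_ Hz]].
  - intro y. apply (D_cont _ _ (0 - - gauss y)). apply D_minus. apply D_const. apply q_der.
  - lra.
  - lra.
  - lra.
  - exists z. lra.
Qed.

Lemma Qinv_spec e : 0 < e < 1 -> q (Qinv e) = e.
Proof.
  intro He. rewrite <- Q_eq. unfold Qinv. apply epsilon_spec.
  destruct (q_surj e He) as [x Hx]. exists x. rewrite Q_eq; auto.
Qed.
Lemma Qinv_q x : Qinv (q x) = x.
Proof. apply q_inj. apply Qinv_spec. apply q_range. Qed.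

Definition hh (x : R) := x + Phi x * SS * exp (x ^ 2 / 2).
Definition w (x : R) := gauss x + x * Phi x.

Lemma gSe x : gauss x * SS * exp (x ^ 2 / 2) = 1.
Proof.
  rewrite gauss_phi0. unfold phi0. assert (HS := S_pos).
  replace (/ SS * exp (- x ^ 2 / 2) * SS * exp (x ^ 2 / 2)) with (exp (- x ^ 2 / 2) * exp (x ^ 2 / 2)) by (field; lra).
  rewrite <- exp_plus. replace (- x ^ 2 / 2 + x ^ 2 / 2) with 0 by field. apply exp_0.
Qed.

Lemma Phi_pos x : 0 < Phi x.
Proof. rewrite Phi_q. generalize (q_range x); lra. Qed.

Lemma gauss_der x : derivable_pt_lim gauss x (- x * gauss x).
Proof.
  apply D_eq with (0 * phi0 x + / sqrt (2 * PI) * (- x * phi0 x)).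
  apply (D_mult (fun _ => / sqrt (2 * PI)) phi0). apply D_const. apply phi0_der. rewrite gauss_phi0. unfold SS. ring.
Qed.

Lemma w_der x : derivable_pt_lim w x (Phi x).
Proof.
  unfold w. apply D_eq with (- x * gauss x + (1 * Phi x + x * gauss x)).
  apply D_plus. apply gauss_der. apply D_mult. apply D_id. apply Phi_der. ring.
Qed.

Lemma w_incr x y : x < y -> w x < w y.
Proof. intro. apply (incr_strict w Phi); auto. intros; apply w_der. intros; apply Phi_pos. Qed.

Lemma w_pos x : x < 0 -> 0 < w x.
Proof.
  intro Hx. destruct (Rlt_or_le 0 (w x)) as [H|H]; auto. exfalso.
  set (x1 := x - 1).
  assert (H1 : w x1 < w x) by (apply w_incr; unfold x1; lra).
  set (c := - w x1). assert (Hc : 0 < c) by (unfold c; lra).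
  assert (HS := S_pos).
  destruct (phi0_tail (c * (SS * SS) / 4)) as [T [HT1 HT]].
  { apply Rdiv_lt_0_compat; [apply Rmult_lt_0_compat; [lra|nra]|lra]. }
  set (y := - (T + Rabs x1)).
  assert (Hx1 : x1 < 0) by (unfold x1; lra).
  assert (Hy : y < x1) by (unfold y; rewrite Rabs_left by lra; lra).
  assert (Hy0 : y < 0) by lra.
  assert (Hay : Rabs y = T + Rabs x1) by (unfold y; rewrite Rabs_Ropp, Rabs_right; [lra| generalize (Rabs_pos x1); lra]).
  assert (K := HT y ltac:(rewrite Hay; generalize (Rabs_pos x1); lra)).
  assert (H2 : w y < w x1) by (apply w_incr; auto).
  assert (HP := Phi_small y ltac:(lra)).
  assert (HPp := Phi_pos y). assert (Hg := gauss_pos y).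
  rewrite Rabs_left in K by lra.
  assert (K2 : - y * (4 * phi0 y / (SS * SS)) < c).
  { replace (- y * (4 * phi0 y / (SS * SS))) with ((- y * phi0 y) * (4 / (SS * SS))) by (field; lra).
    apply Rmult_lt_reg_r with (SS * SS / 4). nra.
    replace (- y * phi0 y * (4 / (SS * SS)) * (SS * SS / 4)) with (- y * phi0 y) by (field; lra).
    replace (c * (SS * SS / 4)) with (c * (SS * SS) / 4) by field. lra. }
  assert (K3 : - y * Phi y <= - y * (4 * phi0 y / (SS * SS))) by (apply Rmult_le_compat_l; lra).
  assert (Wy : w y = gauss y + y * Phi y) by reflexivity. unfold c in K2. lra.
Qed.

Definition hh' (x : R) := 2 + x * Phi x * SS * exp (x ^ 2 / 2).

Lemma hh_der x : derivable_pt_lim hh x (hh' x).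
Proof.
  unfold hh. eapply D_eq.
  - apply D_plus. apply D_id. apply (D_mult (fun y => Phi y * SS) (fun y => exp (y ^ 2 / 2))).
    + apply D_mult. apply Phi_der. apply D_const.
    + apply D_exp. apply D_divc. apply D_pow. apply D_id.
  - assert (K := gSe x). unfold hh'. cbv beta. simpl in *.
    set (ee := exp (x * (x * 1) / 2)) in *. 
    replace (1 + ((gauss x * SS + Phi x * 0) * ee + Phi x * SS * (ee * ((1 + 1) * (x * 1) * 1 / 2))))
      with (1 + gauss x * SS * ee + x * Phi x * SS * ee) by field.
    rewrite K. ring.
Qed.

Lemma hh'_pos x : 0 < hh' x.
Proof.
  unfold hh'. assert (HS := S_pos). assert (He := exp_pos (x ^ 2 / 2)). assert (HP := Phi_pos x).
  destruct (Rlt_or_le x 0) as [Hx|Hx].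
  - assert (Hw := w_pos x Hx). unfold w in Hw.
    assert (0 < (gauss x + x * Phi x) * (SS * exp (x ^ 2 / 2))) by (apply Rmult_lt_0_compat; [lra| nra]).
    assert (K := gSe x).
    replace ((gauss x + x * Phi x) * (SS * exp (x ^ 2 / 2))) with (gauss x * SS * exp (x ^ 2 / 2) + x * Phi x * SS * exp (x ^ 2 / 2)) in H by ring.
    lra.
  - assert (0 <= x * Phi x * SS * exp (x ^ 2 / 2)).
    { repeat apply Rmult_le_pos; lra. }
    lra.
Qed.

Lemma hh_incr x y : x < y -> hh x < hh y.
Proof. intro. apply (incr_strict hh hh'); auto. intros; apply hh_der. intros; apply hh'_pos. Qed.
Lemma hh_inj x y : hh x = hh y -> x = y.
Proof. intro H. destruct (Rtotal_order x y) as [H1|[H1|H1]]; auto.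
  generalize (hh_incr _ _ H1); lra. generalize (hh_incr _ _ H1); lra. Qed.

Lemma hh_m1 : hh (-1) < 0.
Proof.
  assert (Hw := w_pos (-1) ltac:(lra)). unfold w in Hw. unfold hh.
  assert (HS := S_pos). assert (He := exp_pos ((-1) ^ 2 / 2)).
  assert (K := gSe (-1)).
  assert (0 < (gauss (-1) + -1 * Phi (-1)) * (SS * exp ((-1) ^ 2 / 2))) by (apply Rmult_lt_0_compat; [lra| nra]).
  replace ((gauss (-1) + -1 * Phi (-1)) * (SS * exp ((-1) ^ 2 / 2))) with (gauss (-1) * SS * exp ((-1) ^ 2 / 2) - Phi (-1) * SS * exp ((-1) ^ 2 / 2)) in H by ring.
  lra.
Qed.

Lemma hh_cont x : continuity_pt hh x.
Proof. eapply D_cont; apply hh_der. Qed.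

Lemma xs_ex k : 0 < k -> exists x, hh x = / k.
Proof.
  intro Hk. assert (Hik : 0 < / k) by (apply Rinv_0_lt_compat; auto).
  assert (Hb : / k < hh (/ k)).
  { unfold hh. assert (HS := S_pos). assert (He := exp_pos ((/ k) ^ 2 / 2)). assert (HP := Phi_pos (/ k)).
    assert (0 < Phi (/ k) * SS * exp ((/ k) ^ 2 / 2)) by (repeat apply Rmult_lt_0_compat; auto). lra. }
  destruct (IVT (fun y => hh y - / k) (-1) (/ k)) as [z [_ Hz]].
  - intro y. apply (D_cont _ _ (hh' y - 0)). apply D_minus. apply hh_der. apply D_const.
  - lra.
  - generalize hh_m1; lra.
  - lra.
  - exists z. lra.
Qed.

Definition g (k x : R) := (1 - k * x) * Phi x.

Lemma g_der k x : 0 < k -> derivable_pt_lim (g k) x (k * gauss x * (/ k - hh x)).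
Proof.
  intro Hk. unfold g. eapply D_eq.
  - apply (D_mult (fun y => 1 - k * y) Phi). dtac. apply Phi_der.
  - unfold hh. cbv beta. replace (k * gauss x * (/ k - (x + Phi x * SS * exp (x ^ 2 / 2))))
      with (gauss x - k * x * gauss x - k * Phi x * (gauss x * SS * exp (x ^ 2 / 2))) by (field; lra).
    rewrite gSe. ring.
Qed.

Lemma g_max k xs x : 0 < k -> hh xs = / k -> x <> xs -> g k x < g k xs.
Proof.
  intros Hk Hxs Hn.
  destruct (Rtotal_order x xs) as [H|[H|H]]; [| contradiction |].
  - destruct (MVT_cor2 (g k) (fun y => k * gauss y * (/ k - hh y)) x xs H) as [c [Hc1 Hc2]].
    { intros; apply g_der; auto. }
    assert (hh c < / k) by (rewrite <- Hxs; apply hh_incr; lra).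
    assert (0 < k * gauss c * (/ k - hh c)) by (apply Rmult_lt_0_compat; [apply Rmult_lt_0_compat; auto; apply gauss_pos| lra]).
    assert (0 < k * gauss c * (/ k - hh c) * (xs - x)) by (apply Rmult_lt_0_compat; lra). lra.
  - destruct (MVT_cor2 (g k) (fun y => k * gauss y * (/ k - hh y)) xs x H) as [c [Hc1 Hc2]].
    { intros; apply g_der; auto. }
    assert (/ k < hh c) by (rewrite <- Hxs; apply hh_incr; lra).
    assert (0 < k * gauss c * (hh c - / k)) by (apply Rmult_lt_0_compat; [apply Rmult_lt_0_compat; auto; apply gauss_pos| lra]).
    assert (0 < k * gauss c * (hh c - / k) * (x - xs)) by (apply Rmult_lt_0_compat; lra).
    assert (k * gauss c * (/ k - hh c) * (x - xs) = - (k * gauss c * (hh c - / k) * (x - xs))) by ring.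
    lra.
Qed.

Lemma f_g k e : 0 < e < 1 -> Defs.f k e = g k (Qinv e).
Proof.
  intro He. unfold Defs.f, g. rewrite Phi_q, Qinv_spec; auto.
Qed.

Lemma max_iff k xs e : 0 < k -> hh xs = / k ->
  (is_maximizer k e <-> (0 < e < 1 /\ Qinv e = xs)).
Proof.
  intros Hk Hxs. split.
  - intros [He Hm]. split; auto.
    destruct (Req_dec (Qinv e) xs) as [|Hn]; auto. exfalso.
    assert (K := Hm (q xs) (q_range xs)).
    rewrite !f_g in K by (auto; apply q_range). rewrite Qinv_q in K.
    generalize (g_max k xs (Qinv e) Hk Hxs Hn). lra.
  - intros [He Hq]. split; auto. intros e' He'.
    rewrite !f_g by auto. rewrite Hq.
    destruct (Req_dec (Qinv e') xs) as [->|Hn]. lra.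
    left; apply g_max; auto.
Qed.

Lemma fp_iff k e : 0 < k -> 0 < e < 1 -> (fixed_point k e <-> hh (Qinv e) = / k).
Proof.
  intros Hk He. unfold fixed_point.
  replace (1 - e) with (Phi (Qinv e)) by (rewrite Phi_q, Qinv_spec; auto).
  change (/ hh (Qinv e) = k <-> hh (Qinv e) = / k).
  split; intro H. rewrite <- H, Rinv_inv; auto. rewrite H, Rinv_inv; auto.
Qed.

Theorem proposition1 :
  (forall kappa, 0 < kappa < 1 -> exists! e, is_maximizer kappa e) /\
  (forall kappa e, 0 < kappa < 1 -> 0 < e < 1 ->
     (is_maximizer kappa e <-> fixed_point kappa e)) /\
  (forall k1 k2 e1 e2, 0 < k1 -> k1 < k2 -> k2 < 1 ->
     is_maximizer k1 e1 -> is_maximizer k2 e2 -> e1 < e2).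
Proof.
  split; [|split].
  - intros k Hk. destruct (xs_ex k ltac:(lra)) as [xs Hxs].
    exists (q xs). split.
    + apply (max_iff k xs); try lra; auto. split. apply q_range. apply Qinv_q.
    + intros e' He'. apply (max_iff k xs) in He'; try lra; auto. destruct He' as [He1 He2].
      rewrite <- He2. apply Qinv_spec; auto.
  - intros k e Hk He. destruct (xs_ex k ltac:(lra)) as [xs Hxs].
    rewrite (max_iff k xs e) by (auto; lra). rewrite fp_iff by (auto; lra).
    split.
    + intros [_ H]. rewrite H; auto.
    + intro H. split; auto. apply hh_inj. rewrite H, Hxs. auto.
  - intros a b e1 e2 Ha Hab Hb M1 M2.
    destruct (xs_ex a ltac:(lra)) as [x1 Hx1]. destruct (xs_ex b ltac:(lra)) as [x2 Hx2].
    apply (max_iff a x1) in M1; auto. apply (max_iff b x2) in M2; auto; try lra.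
    destruct M1 as [He1 Q1]. destruct M2 as [He2 Q2].
    rewrite <- (Qinv_spec e1 He1), <- (Qinv_spec e2 He2), Q1, Q2.
    apply q_decr.
    destruct (Rtotal_order x2 x1) as [H|[H|H]]; auto.
    + rewrite H in Hx2. assert (/ b < / a) by (apply Rinv_lt_contravar; [apply Rmult_lt_0_compat; lra | lra]). lra.
    + assert (hh x1 < hh x2) by (apply hh_incr; auto). assert (/ b < / a) by (apply Rinv_lt_contravar; [apply Rmult_lt_0_compat; lra | lra]). lra.
Qed.
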